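(* Let $(A,[\cdot,\cdot])$ be a Malcev algebra, $(V,\rho)$ a representation of $A$, and $T:V\to A$ a linear map. Then $T$ is an $\mathcal{O}$-operator of $A$ associated to $\rho$ if and only if $r=T-\sigma(T)$ is a skew-symmetric solution of the Malcev Yang-Baxter equation in the Malcev algebra $A\ltimes_{\rho^*}V^*$.
   Context: Field $\mathbb{K}$ of characteristic zero, finite-dimensional spaces. A Malcev algebra is a vector space with an anti-symmetric bracket satisfying $J(x,y,[x,z])=[J(x,y,z),x]$, $J(x,y,z)=[[x,y],z]+[[z,x],y]+[[y,z],x]$. A representation of $A$ on $V$ is a linear map $\rho:A\to\mathrm{End}(V)$ with $\rho([[x,y],z])=\rho(x)\rho(y)\rho(z)-\rho(z)\rho(x)\rho(y)+\rho(y)\rho([z,x])-\rho([y,z])\rho(x)$. Its dual $\rho^*:A\to\mathrm{End}(V^* )$ is $\langle\rho^*(x)a^*,b\rangle=-\langle a^*,\rho(x)b\rangle$, again a representation. $A\ltimes_{\rho^*}V^*$ denotes $A\oplus V^*$ with bracket $[x+a^*,y+b^*]=[x,y]+\rho^*(x)b^*-\rho^*(y)a^*$ (a Malcev algebra). A linear map $T:V\to A$ is an $\mathcal{O}$-operator associated to $\rho$ if $[T(a),T(b)]=T(\rho(T(a))b-\rho(T(b))a)$ for all $a,b\in V$. Via $\mathrm{Hom}(V,A)\cong A\otimes V^*$, $T$ is identified with $\sum_i T(v_i)\otimes v_i^*\in (A\ltimes_{\rho^*}V^* )^{\otimes 2}$ for a basis $\{v_i\}$ of $V$ with dual basis $\{v_i^*\}$,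 and $\sigma(T)=\sum_i v_i^*\otimes T(v_i)$. For $r=\sum_i x_i\otimes y_i$ in $L\otimes L$ ($L$ a Malcev algebra), $r$ solves the Malcev Yang-Baxter equation if $\sum_{i,j}[x_i,x_j]\otimes y_i\otimes y_j+\sum_{i,j}x_i\otimes[y_i,x_j]\otimes y_j+\sum_{i,j}x_i\otimes x_j\otimes[y_i,y_j]=0$; skew-symmetric means $r=-\sigma(r)$. *)

(* Defs.v *)
(* Finite-dimensional spaces are modelled in coordinates:
   A = K^n (column vectors 'cV[K]_n), V = K^m ('cV[K]_m), V^* = K^m with the
   pairing <a*, b> = a*^T b, and A ⋉ V^* = K^(n+m) via col_mx. *)
From mathcomp Require Import all_boot all_algebra.
Set Implicit Arguments. Unset Strict Implicit. Unset Printing Implicit Defensive.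
Import GRing.Theory.
Local Open Scope ring_scope.

Section MalcevDefs.
Variable K : fieldType.

Definition jacobiator {N : nat} (br : 'cV[K]_N -> 'cV[K]_N -> 'cV[K]_N)
  (x y z : 'cV[K]_N) : 'cV[K]_N :=
  br (br x y) z + br (br z x) y + br (br y z) x.

Definition bilinear_bracket {N : nat} (br : 'cV[K]_N -> 'cV[K]_N -> 'cV[K]_N) : Prop :=
  (forall (a : K) x y z, br (a *: x + y) z = a *: br x z + br y z) /\
  (forall (a : K) x y z, br x (a *: y + z) = a *: br x y + br x z).

Definition malcev_algebra {N : nat} (br : 'cV[K]_N -> 'cV[K]_N -> 'cV[K]_N) : Prop :=
  [/\ bilinear_bracket br,
      (forall x y, br x y = - br y x) &
      (forall x y z, jacobiator br x y (br x z) = br (jacobiator br x y z) x)].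

Definition malcev_rep {n m : nat} (br : 'cV[K]_n -> 'cV[K]_n -> 'cV[K]_n)
  (rho : 'cV[K]_n -> 'M[K]_m) : Prop :=
  (forall (a : K) x y, rho (a *: x + y) = a *: rho x + rho y) /\
  (forall x y z, rho (br (br x y) z) =
     rho x *m rho y *m rho z - rho z *m rho x *m rho y
     + rho y *m rho (br z x) - rho (br y z) *m rho x).

Definition pairing {m : nat} (a : 'cV[K]_m) (b : 'cV[K]_m) : K := (a^T *m b) 0 0.

(* dual representation: <rho^*(x) a, b> = - <a, rho(x) b>, i.e. rho^*(x) = -(rho x)^T *)
Definition dual_rep {n m : nat} (rho : 'cV[K]_n -> 'M[K]_m) (x : 'cV[K]_n) : 'M[K]_m :=
  - (rho x)^T.

Definition semidirect_bracket {n m : nat} (br : 'cV[K]_n -> 'cV[K]_n -> 'cV[K]_n)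
  (rho : 'cV[K]_n -> 'M[K]_m) (u v : 'cV[K]_(n + m)) : 'cV[K]_(n + m) :=
  col_mx (br (usubmx u) (usubmx v))
         (dual_rep rho (usubmx u) *m dsubmx v - dual_rep rho (usubmx v) *m dsubmx u).

Definition O_operator {n m : nat} (br : 'cV[K]_n -> 'cV[K]_n -> 'cV[K]_n)
  (rho : 'cV[K]_n -> 'M[K]_m) (T : 'M[K]_(n, m)) : Prop :=
  forall a b : 'cV[K]_m,
    br (T *m a) (T *m b) = T *m (rho (T *m a) *m b - rho (T *m b) *m a).

(* tensors: L ⊗ L = N x N matrices, x ⊗ y = x y^T ; L ⊗ L ⊗ L = functions on triples *)
Definition tens2 {N : nat} (x y : 'cV[K]_N) : 'M[K]_N := x *m y^T.
Definition tens3 {N : nat} (x y z : 'cV[K]_N) : {ffun 'I_N * 'I_N * 'I_N -> K} :=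
  [ffun p => x p.1.1 0 * y p.1.2 0 * z p.2 0].

(* the tensor r = sum_i x_i ⊗ y_i given by the list of pairs (x_i, y_i) *)
Definition tensor_of {N : nat} (rs : seq ('cV[K]_N * 'cV[K]_N)) : 'M[K]_N :=
  \sum_(p <- rs) tens2 p.1 p.2.

Definition tswap {N : nat} (rs : seq ('cV[K]_N * 'cV[K]_N)) :=
  [seq (p.2, p.1) | p <- rs].

Definition skew_symmetric {N : nat} (rs : seq ('cV[K]_N * 'cV[K]_N)) : Prop :=
  tensor_of rs = - tensor_of (tswap rs).

Definition MYBE {N : nat} (br : 'cV[K]_N -> 'cV[K]_N -> 'cV[K]_N)
  (rs : seq ('cV[K]_N * 'cV[K]_N)) : Prop :=
  \sum_(p <- rs) \sum_(q <- rs) tens3 (br p.1 q.1) p.2 q.2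
  + \sum_(p <- rs) \sum_(q <- rs) tens3 p.1 (br p.2 q.1) q.2
  + \sum_(p <- rs) \sum_(q <- rs) tens3 p.1 q.1 (br p.2 q.2) = 0.

Definition inA {n m : nat} (x : 'cV[K]_n) : 'cV[K]_(n + m) := col_mx x 0.
Definition inVd {n m : nat} (a : 'cV[K]_m) : 'cV[K]_(n + m) := col_mx 0 a.

(* standard basis v_i of V; its dual basis v_i^* has the same coordinates
   under the pairing a^T b *)
Definition basisV {m : nat} (i : 'I_m) : 'cV[K]_m := delta_mx i 0.

(* T = sum_i T(v_i) ⊗ v_i^*  *)
Definition O_tensor {n m : nat} (T : 'M[K]_(n, m)) : seq ('cV[K]_(n + m) * 'cV[K]_(n + m)) :=
  [seq (inA (T *m basisV i), inVd (basisV i)) | i <- enum 'I_m].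

(* r = T - sigma(T) = sum_i T(v_i) ⊗ v_i^* - sum_i v_i^* ⊗ T(v_i) *)
Definition r_of {n m : nat} (T : 'M[K]_(n, m)) : seq ('cV[K]_(n + m) * 'cV[K]_(n + m)) :=
  O_tensor T ++ [seq (- p.1, p.2) | p <- tswap (O_tensor T)].

End MalcevDefs.

(* Main.v *)
Require Import Defs.
From mathcomp Require Import all_boot all_algebra.
From mathcomp Require Import ring.
Set Implicit Arguments. Unset Strict Implicit. Unset Printing Implicit Defensive.
Import GRing.Theory.
Local Open Scope ring_scope.
Lemma r_of_eq (K : fieldType) n m (T : 'M[K]_(n, m)) :
  r_of T = [seq (inA (T *m basisV K i), inVd (basisV K i)) | i <- enum 'I_m]
        ++ [seq (@inVd K n m (- basisV K i), inA (T *m basisV K i)) | i <- enum 'I_m].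
Proof.
rewrite /r_of /tswap /O_tensor -!map_comp; congr (_ ++ _); apply: eq_map => i /=.
by rewrite /inVd opp_col_mx oppr0.
Qed.

Lemma r_sum (K : fieldType) n m (T : 'M[K]_(n, m)) (R : nmodType)
  (F : 'cV[K]_(n + m) * 'cV[K]_(n + m) -> 'cV[K]_(n + m) * 'cV[K]_(n + m) -> R) :
  let A i := (inA (T *m basisV K i), inVd (basisV K i)) in
  let B i := (@inVd K n m (- basisV K i), inA (T *m basisV K i)) in
  \sum_(p <- r_of T) \sum_(q <- r_of T) F p q =
  \sum_(i < m) \sum_(j < m) (F (A i) (A j) + F (A i) (B j) + F (B i) (A j) + F (B i) (B j)).
Proof.
move=> A B; have E : enum 'I_m = index_enum 'I_m by rewrite enumT [index_enum _]unlock.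
have E2 : Finite.enum 'I_m = index_enum 'I_m by rewrite [index_enum _]unlock.
rewrite r_of_eq big_cat /= !big_map ?E ?E2.
rewrite -big_split /=; apply: eq_bigr => i _.
rewrite !big_cat /= !big_map ?E ?E2 !big_split /= !addrA.
by [].
Qed.

Lemma br0l (K : fieldType) N (br : 'cV[K]_N -> 'cV[K]_N -> 'cV[K]_N) :
  bilinear_bracket br -> forall z, br 0 z = 0.
Proof.
move=> [h1 _] z; have := h1 1 0 0 z; rewrite !scale1r addr0 => h.
by apply: (@addrI _ (br 0 z)); rewrite addr0 -h.
Qed.

Lemma br0r (K : fieldType) N (br : 'cV[K]_N -> 'cV[K]_N -> 'cV[K]_N) :
  bilinear_bracket br -> forall z, br z 0 = 0.
Proof.
move=> [_ h1] z; have := h1 1 z 0 0; rewrite !scale1r addr0 => h.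
by apply: (@addrI _ (br z 0)); rewrite addr0 -h.
Qed.

Lemma rho0 (K : fieldType) n m (rho : 'cV[K]_n -> 'M[K]_m) :
  (forall (a : K) x y, rho (a *: x + y) = a *: rho x + rho y) -> rho 0 = 0.
Proof.
move=> h1; have := h1 1 0 0; rewrite !scale1r addr0 => h.
by apply: (@addrI _ (rho 0)); rewrite addr0 -h.
Qed.

Section B.
Variables (K : fieldType) (n m : nat) (br : 'cV[K]_n -> 'cV[K]_n -> 'cV[K]_n)
  (rho : 'cV[K]_n -> 'M[K]_m).
Hypothesis hb : bilinear_bracket br.
Hypothesis hr : forall (a : K) x y, rho (a *: x + y) = a *: rho x + rho y.

Lemma sbAA x y : semidirect_bracket br rho (inA x) (inA y) = inA (br x y).
Proof. by rewrite /semidirect_bracket /inA !col_mxKu !col_mxKd !mulmx0 subr0. Qed.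

Lemma sbAV x b : semidirect_bracket br rho (inA x) (inVd b) = inVd (- ((rho x)^T *m b)).
Proof.
rewrite /semidirect_bracket /inA /inVd !col_mxKu !col_mxKd br0r // mulmx0 subr0.
by rewrite /dual_rep mulNmx.
Qed.

Lemma sbVA a y : semidirect_bracket br rho (inVd a) (inA y) = inVd ((rho y)^T *m a).
Proof.
rewrite /semidirect_bracket /inA /inVd !col_mxKu !col_mxKd br0l // mulmx0 sub0r.
by rewrite /dual_rep mulNmx opprK.
Qed.

Lemma sbVV a b : semidirect_bracket br rho (inVd a) (inVd b) = 0.
Proof.
rewrite /semidirect_bracket /inA /inVd !col_mxKu !col_mxKd br0l // /dual_rep rho0 //.
by rewrite trmx0 oppr0 !mul0mx subrr col_mx0.
Qed.
End B.

Lemma inA_l (K : fieldType) n m (x : 'cV[K]_n) c : (@inA K n m x) (lshift m c) 0 = x c 0.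
Proof. by rewrite /inA col_mxEu. Qed.
Lemma inA_r (K : fieldType) n m (x : 'cV[K]_n) c : (@inA K n m x) (rshift n c) 0 = 0.
Proof. by rewrite /inA col_mxEd mxE. Qed.
Lemma inVd_l (K : fieldType) n m (x : 'cV[K]_m) c : (@inVd K n m x) (lshift m c) 0 = 0.
Proof. by rewrite /inVd col_mxEu mxE. Qed.
Lemma inVd_r (K : fieldType) n m (x : 'cV[K]_m) c : (@inVd K n m x) (rshift n c) 0 = x c 0.
Proof. by rewrite /inVd col_mxEd. Qed.
Lemma basisE (K : fieldType) m (i a : 'I_m) : basisV K i a 0 = (a == i)%:R.
Proof. by rewrite /basisV mxE eqxx andbT. Qed.
Lemma mulbE (K : fieldType) p m (M : 'M[K]_(p, m)) i a : (M *m basisV K i) a 0 = M a i.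
Proof. by rewrite /basisV -colE mxE. Qed.
Lemma oppE (K : fieldType) p (v : 'cV[K]_p) a : (- v) a 0 = - v a 0.
Proof. by rewrite mxE. Qed.

Lemma dsum_ffunE (aT : finType) (R : nmodType) (I : Type) (r : seq I) (F : I -> I -> {ffun aT -> R}) x :
  (\sum_(p <- r) \sum_(q <- r) F p q) x = \sum_(p <- r) \sum_(q <- r) F p q x.
Proof. by rewrite sum_ffunE; apply: eq_bigr => p _; rewrite sum_ffunE. Qed.

Lemma sum_dR (K : fieldType) m (F : 'I_m -> K) b : \sum_(j < m) F j * (b == j)%:R = F b.
Proof.
rewrite (bigD1 b) //= eqxx mulr1 big1 ?addr0 // => j /negbTE; rewrite eq_sym => ->.
by rewrite mulr0.
Qed.
Lemma sum_dM (K : fieldType) m (x : K) (F : 'I_m -> K) b : \sum_(j < m) x * (b == j)%:R * F j = x * F b.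
Proof.
rewrite (bigD1 b) //= eqxx mulr1 big1 ?addr0 // => j /negbTE; rewrite eq_sym => ->.
by rewrite mulr0 mul0r.
Qed.
Lemma subE (K : fieldType) p (u v : 'cV[K]_p) a : (u - v) a 0 = u a 0 - v a 0.
Proof. by rewrite !mxE. Qed.

Section C.
Variables (K : fieldType) (n m : nat) (br : 'cV[K]_n -> 'cV[K]_n -> 'cV[K]_n)
  (rho : 'cV[K]_n -> 'M[K]_m) (T : 'M[K]_(n, m)).
Hypothesis hb : bilinear_bracket br.
Hypothesis hr : forall (a : K) x y, rho (a *: x + y) = a *: rho x + rho y.

Definition LHS := let rs := r_of T in let br' := semidirect_bracket br rho in
  \sum_(p <- rs) \sum_(q <- rs) tens3 (br' p.1 q.1) p.2 q.2
  + \sum_(p <- rs) \sum_(q <- rs) tens3 p.1 (br' p.2 q.1) q.2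
  + \sum_(p <- rs) \sum_(q <- rs) tens3 p.1 q.1 (br' p.2 q.2).

Definition Dv (a b : 'cV[K]_m) := br (T *m a) (T *m b) - T *m (rho (T *m a) *m b - rho (T *m b) *m a).

Ltac front := rewrite /LHS /= !ffunE !dsum_ffunE !r_sum -!big_split /=;
under eq_bigr => i _ do rewrite -!big_split /=;
under eq_bigr => i _ do under eq_bigr => j _ do rewrite !ffunE /= ?sbAA ?sbAV ?sbVA ?sbVV // ?mulmxN ?inA_l ?inA_r ?inVd_l ?inVd_r ?oppE ?mulbE ?basisE ?mxE ?mul0r ?mulr0 ?addr0 ?add0r ?mulrN ?mulNr.

Lemma case1 c a b : LHS (lshift m c, rshift n a, rshift n b) = Dv (basisV K a) (basisV K b) c 0.
Proof.
rewrite /LHS /= !ffunE !dsum_ffunE !r_sum -!big_split /=.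
under eq_bigr => i _ do rewrite -!big_split /=.
under eq_bigr => i _ do under eq_bigr => j _ do rewrite !ffunE /= ?sbAA ?sbAV ?sbVA ?sbVV // ?mulmxN ?inA_l ?inA_r ?inVd_l ?inVd_r ?oppE ?mulbE ?basisE ?mxE ?mul0r ?mulr0 ?addr0 ?add0r ?mulrN ?mulNr.
under eq_bigr => i _ do rewrite !big_split /= sumrN sum_dR sum_dR sum_dM.
rewrite !big_split /= sumrN sum_dR.
rewrite /Dv mulmxBr !mulmxA !subE !mulbE !mxE.
ring.
Qed.

Lemma case2 a c b : LHS (rshift n a, lshift m c, rshift n b) = - Dv (basisV K a) (basisV K b) c 0.
Proof.
front.
transitivity (\sum_(i < m) \sum_(j < m) (- (T c i * rho (T *m basisV K j) i a) * (b == j)%:R)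
  - \sum_(i < m) \sum_(j < m) (br (T *m basisV K i) (T *m basisV K j) c 0 * (a == i)%:R * (b == j)%:R)
  + \sum_(i < m) \sum_(j < m) ((T c j * rho (T *m basisV K i) j b) * (a == i)%:R)).
  rewrite -sumrB -big_split /=; apply: eq_bigr => i _; rewrite -sumrB -big_split /=; apply: eq_bigr => j _; ring.
rewrite [X in _ + X]exchange_big /=.
under eq_bigr => i _ do rewrite sum_dR.
under [X in _ - X + _]eq_bigr => i _ do rewrite sum_dR.
under [X in _ + X]eq_bigr => i _ do rewrite sum_dR.
rewrite sum_dR sumrN.
rewrite /Dv mulmxBr !mulmxA !subE !mulbE !mxE.
ring.
Qed.
Lemma case3 a b c : LHS (rshift n a, rshift n b, lshift m c) = Dv (basisV K a) (basisV K b) c 0.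
Proof.
front.
transitivity (\sum_(i < m) \sum_(j < m) ((T c j * rho (T *m basisV K i) j a) * (b == i)%:R)
  - \sum_(i < m) \sum_(j < m) ((T c j * rho (T *m basisV K i) j b) * (a == i)%:R)
  + \sum_(i < m) \sum_(j < m) (br (T *m basisV K i) (T *m basisV K j) c 0 * (a == i)%:R * (b == j)%:R)).
  rewrite -sumrB -big_split /=; apply: eq_bigr => i _; rewrite -sumrB -big_split /=; apply: eq_bigr => j _; ring.
rewrite [X in X - _ + _]exchange_big [X in _ - X + _]exchange_big /=.
under eq_bigr => i _ do rewrite sum_dR.
under [X in _ - X + _]eq_bigr => i _ do rewrite sum_dR.
under [X in _ + X]eq_bigr => i _ do rewrite sum_dR.
rewrite sum_dR.
rewrite /Dv mulmxBr !mulmxA !subE !mulbE !mxE.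
ring.
Qed.
Lemma case0 t : (forall c a b, t <> (lshift m c, rshift n a, rshift n b)) ->
  (forall c a b, t <> (rshift n a, lshift m c, rshift n b)) ->
  (forall c a b, t <> (rshift n a, rshift n b, lshift m c)) -> LHS t = 0.
Proof.
case: t => [[u v] w].
rewrite -(splitK u) -(splitK v) -(splitK w).
case: (split u) => x; case: (split v) => y; case: (split w) => z /= h1 h2 h3;
  try (by case: (h1 x y z)); try (by case: (h2 y x z)); try (by case: (h3 z x y)); try (by case: (h1 x y z));
  front; rewrite big1 // => i _; rewrite big1 // => j _; rewrite ?mul0r ?addr0 ?subr0 //.
Qed.

Lemma allzero : (forall a b, Dv (basisV K a) (basisV K b) = 0) -> forall t, LHS t = 0.
Proof.
move=> hD [[u v] w].
rewrite -(splitK u) -(splitK v) -(splitK w).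
case: (split u) => x; case: (split v) => y; case: (split w) => z /=;
 try (by rewrite case1 hD mxE); try (by rewrite case2 hD mxE oppr0); try (by rewrite case3 hD mxE);
 front; rewrite big1 // => i _; rewrite big1 // => j _; rewrite ?mul0r ?addr0 ?subr0 //.
Qed.

Lemma Dv_linl s x y z : Dv (s *: x + y) z = s *: Dv x z + Dv y z.
Proof.
case: hb => hb1 hb2.
rewrite /Dv !mulmxDr -!scalemxAr hb1 hr !mulmxDl -!scalemxAl !mulmxDr !mulmxN -!scalemxAr.
rewrite ?mulmxBr ?mulmxDr ?mulmxN -?scalemxAr.
apply/matrixP => i j; rewrite !mxE; ring.
Qed.

Lemma Dv_linr s x y z : Dv x (s *: y + z) = s *: Dv x y + Dv x z.
Proof.
case: hb => hb1 hb2.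
rewrite /Dv !mulmxDr -!scalemxAr hb2 hr ?mulmxDl -?scalemxAl ?mulmxDr ?mulmxN -?scalemxAr.
rewrite ?mulmxBr ?mulmxDr ?mulmxN -?scalemxAr.
apply/matrixP => i j; rewrite !mxE; ring.
Qed.
End C.

Lemma lin_zero (K : fieldType) p q (f : 'cV[K]_p -> 'cV[K]_q) :
  (forall (s : K) x y, f (s *: x + y) = s *: f x + f y) -> (forall i, f (basisV K i) = 0) ->
  forall x, f x = 0.
Proof.
move=> hf hi x.
have f0 : f 0 = 0.
  have := hf 1 0 0; rewrite !scale1r addr0 => h.
  by apply: (@addrI _ (f 0)); rewrite addr0 -h.
rewrite [x]matrix_sum_delta.
elim/big_rec: _ => [|i s _ IH]; first exact: f0.
rewrite big_ord1 -[x i 0 *: _ + _]/(x i 0 *: basisV K i + s) hf hi IH.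
by rewrite scaler0 addr0.
Qed.


Theorem theorem2p10 (K : fieldType) (hK : [pchar K] =i pred0) (n m : nat)
  (br : 'cV[K]_n -> 'cV[K]_n -> 'cV[K]_n) (rho : 'cV[K]_n -> 'M[K]_m)
  (T : 'M[K]_(n, m)) :
  malcev_algebra br -> malcev_rep br rho ->
  (O_operator br rho T <->
   (skew_symmetric (r_of T) /\ MYBE (semidirect_bracket br rho) (r_of T))).
Proof.
move=> [hb _ _] [hr _].
have skew : skew_symmetric (r_of T).
  rewrite /skew_symmetric /tensor_of r_of_eq /tswap map_cat -!map_comp !big_cat !big_map /=.
  have hN : forall a : 'cV[K]_m, @inVd K n m (- a) = - inVd a.
    by move=> a; rewrite /inVd opp_col_mx oppr0.
  under [X in _ + X = _]eq_bigr => i _ do rewrite hN /tens2 mulNmx.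
  under [X in _ = - (_ + X)]eq_bigr => i _ do rewrite hN /tens2 linearN /= mulmxN.
  by rewrite !sumrN opprD opprK addrC.
have mybeE : MYBE (semidirect_bracket br rho) (r_of T) <-> LHS br rho T = 0 by [].
have OE : O_operator br rho T <-> forall a b, Dv br rho T a b = 0.
  split => h a b; first by rewrite /Dv h subrr.
  by apply/eqP; rewrite -subr_eq0; apply/eqP; exact: h.
rewrite mybeE OE; split.
  move=> hD; split=> //; apply/ffunP => t; rewrite allzero // ?ffunE //.
move=> [_ hL].
have hB : forall i j, Dv br rho T (basisV K i) (basisV K j) = 0.
  move=> i j; apply/matrixP => c k; rewrite [k]ord1 -case1 // hL ffunE mxE.
  by [].
have h1 : forall j x, Dv br rho T x (basisV K j) = 0.
  move=> j; apply: lin_zero => [s x y|i]; [exact: Dv_linl | exact: hB].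
move=> a; apply: lin_zero => [s x y|j]; [exact: Dv_linr | exact: h1].
Qed.
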